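(* Let $G$ be a connected nontrivial graph with $m$ vertices and let $n\geq2$. If $\min\{(3n-2)\lambda(G),\ m+2e(G)\}\geq \min\{2\xi(G)+4,\ 5\delta(G)+1\}$, then $G\boxtimes P_n$ is maximally restricted edge-connected, i.e. $\lambda'(G\boxtimes P_n)=\xi(G\boxtimes P_n)$.
   Context: All graphs are finite, simple and undirected; ''nontrivial'' means having at least two vertices. $P_n$ denotes the path on $n$ vertices. For a graph $G$: $e(G)=|E(G)|$; $\delta(G)$ is the minimum degree; $\lambda(G)$ is the edge-connectivity; for an edge $uv$, its edge-degree is $d_G(u)+d_G(v)-2$, and $\xi(G)$ is the minimum edge-degree over all edges of $G$. A restricted edge-cut of a connected graph $G$ is a set $S\subseteq E(G)$ such that $G-S$ is disconnected and every component of $G-S$ has at least $2$ vertices; $\lambda'(G)$ is the minimum cardinality of a restricted edge-cut. A graph $G$ is maximally restricted edge-connected if $\lambda'(G)=\xi(G)$. The strong product $G\boxtimes H$ has vertex set $V(G)\times V(H)$, with $(x_1,y_1)$ and $(x_2,y_2)$ adjacent iff either $x_1=x_2$ and $y_1y_2\in E(H)$, or $y_1=y_2$ and $x_1x_2\in E(G)$, or $x_1x_2\in E(G)$ and $y_1y_2\in E(H)$. (One has $\xi(G\boxtimes P_n)=\min\{2\xi(G)+4,5\delta(G)+1\}$.) *)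

(* Defs.v *)
From mathcomp Require Import all_boot.
Set Implicit Arguments. Unset Strict Implicit. Unset Printing Implicit Defensive.

Section Graphs.
Variable V : finType.
Implicit Types (g : rel V) (S : {set {set V}}).

Definition simple_graph g := symmetric g /\ irreflexive g.

Definition edges g : {set {set V}} :=
  [set [set x.1; x.2] | x : V * V & g x.1 x.2].

Definition num_edges g := #|edges g|.

Definition connected g := forall x y : V, connect g x y.

Definition nontrivial := 1 < #|V|.

Definition deg g (x : V) := #|[set y | g x y]|.

(* minimum degree delta(G) (default #|V| only when V is empty) *)
Definition min_deg g := \big[minn/#|V|]_(x : V) deg g x.

Definition min_edge_deg g :=
  \big[minn/(2 * #|V|)]_(p : V * V | g p.1 p.2) (deg g p.1 + deg g p.2 - 2).

Definition remove_edges g S : rel V :=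
  fun x y => g x y && ([set x; y] \notin S).

Definition edge_cut g S :=
  (S \subset edges g) && [exists x, exists y, ~~ connect (remove_edges g S) x y].

Definition restricted_edge_cut g S :=
  edge_cut g S &&
  [forall x, 2 <= #|[set y | connect (remove_edges g S) x y]|].

(* lambda(G): minimum cardinality of an edge-cut (default #|E(G)|, which is
   itself an edge-cut for a nontrivial graph) *)
Definition edge_conn g :=
  \big[minn/#|edges g|]_(S | edge_cut g S) #|S|.

(* lambda'(G): minimum cardinality of a restricted edge-cut
   (default #|E(G)| only if no restricted edge-cut exists) *)
Definition restr_edge_conn g :=
  \big[minn/#|edges g|]_(S | restricted_edge_cut g S) #|S|.

Definition max_restr_edge_conn g := restr_edge_conn g = min_edge_deg g.

End Graphs.

Definition path_graph (n : nat) : rel 'I_n :=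
  fun i j => (i.+1 == j :> nat) || (j.+1 == i :> nat).

Definition strong_prod (V W : finType) (g : rel V) (h : rel W) : rel (V * W) :=
  fun p q => [|| (p.1 == q.1) && h p.2 q.2,
                 (p.2 == q.2) && g p.1 q.1
               | g p.1 q.1 && h p.2 q.2].
Arguments path_graph n : clear implicits.

(* Main.v *)
Require Import Defs.
From mathcomp Require Import all_boot zify.
Set Implicit Arguments. Unset Strict Implicit. Unset Printing Implicit Defensive.

Lemma bigmin_le_seq (I : eqType) (r : seq I) (P : pred I) (F : I -> nat) d j :
  j \in r -> P j -> \big[minn/d]_(i <- r | P i) F i <= F j.
Proof.
elim: r => [//|x r IH]; rewrite inE big_cons => /orP [/eqP <-|jr] Pj.
  by rewrite Pj geq_minl.
case: (P x); last exact: IH.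
by rewrite geq_min IH ?orbT.
Qed.
Lemma bigmin_le (I : finType) (P : pred I) (F : I -> nat) d j : P j ->
  \big[minn/d]_(i | P i) F i <= F j.
Proof. by move=> Pj; apply: bigmin_le_seq; rewrite ?mem_index_enum. Qed.
Lemma bigmin_ge (I : finType) (P : pred I) (F : I -> nat) d k :
  k <= d -> (forall i, P i -> k <= F i) -> k <= \big[minn/d]_(i | P i) F i.
Proof.
move=> kd kF; elim/big_ind: _ => //.
by move=> x y kx ky; rewrite leq_min kx.
Qed.

Section Cut.
Variable T : finType.
Variable e : rel T.
Hypothesis esym : symmetric e.

Definition xcut (Z : {set T}) :=
  \sum_x \sum_y (e x y && ((x \in Z) != (y \in Z))).
Definition cutpairs (Z : {set T}) :=
  [set x : T * T | e x.1 x.2 && (x.1 \in Z) && (x.2 \notin Z)].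
Definition cutset (Z : {set T}) : {set {set T}} :=
  [set [set x.1; x.2] | x in cutpairs Z].

Lemma card_cutpairs Z : #|cutpairs Z| =
  \sum_x \sum_y (e x y && (x \in Z) && (y \notin Z)).
Proof.
rewrite -sum1_card big_mkcond /= pair_bigA /=.
by apply: eq_bigr => x _; rewrite inE; case: ifP.
Qed.

Lemma card_cutset Z : #|cutset Z| = #|cutpairs Z|.
Proof.
apply: card_in_imset => [[x1 x2]] [y1 y2]; rewrite !inE /= => /andP[/andP[_ x1Z] x2Z]
  /andP[/andP[_ y1Z] y2Z] E.
have h1 : x1 \in [set y1; y2] by rewrite -E !inE eqxx.
have h2 : x2 \in [set y1; y2] by rewrite -E !inE eqxx orbT.
move: h1 h2; rewrite !inE => /orP[/eqP e1|/eqP e1]; last by move: x1Z; rewrite e1 (negbTE y2Z).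
move=> /orP[/eqP e2|/eqP e2]; first by move: x2Z; rewrite e2 y1Z.
by rewrite e1 e2.
Qed.

Lemma xcut_cutset Z : xcut Z = 2 * #|cutset Z|.
Proof.
rewrite card_cutset card_cutpairs mul2n -addnn.
have -> : xcut Z = \sum_x \sum_y (e x y && (x \in Z) && (y \notin Z)) +
                   \sum_x \sum_y (e x y && (x \notin Z) && (y \in Z)).
  rewrite -big_split /=; apply: eq_bigr => x _; rewrite -big_split /=.
  by apply: eq_bigr => y _; case: (e x y); case: (x \in Z); case: (y \in Z).
congr (_ + _); rewrite exchange_big /=; apply: eq_bigr => x _; apply: eq_bigr => y _.
by rewrite esym; case: (e x y); case: (x \in Z); case: (y \in Z).
Qed.

Lemma xcutC Z : xcut (~: Z) = xcut Z.
Proof.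
by apply: eq_bigr => x _; apply: eq_bigr => y _; rewrite !inE; case: (x \in Z); case: (y \in Z).
Qed.

Lemma cutset_sub Z : cutset Z \subset edges e.
Proof.
apply/subsetP => s /imsetP [x]; rewrite inE => /andP[/andP[exy _] _] ->.
by apply/imsetP; exists x; rewrite ?inE.
Qed.

Lemma cut_closed Z (S : {set {set T}}) : cutset Z \subset S ->
  forall x y, connect (remove_edges e S) x y -> (x \in Z) = (y \in Z).
Proof.
move=> sub x y; apply: closed_connect => a b /andP[eab nS].
case aZ: (a \in Z); case bZ: (b \in Z) => //; move/negP: nS; case; apply: (subsetP sub).
  by apply/imsetP; exists (a, b); rewrite // !inE eab aZ bZ.
apply/imsetP; exists (b, a); first by rewrite !inE esym eab aZ bZ.
by rewrite /= setUC.
Qed.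

Lemma edge_conn_le (Z : {set T}) x y : x \in Z -> y \notin Z -> edge_conn e <= #|cutset Z|.
Proof.
move=> xZ yZ; apply: bigmin_le; rewrite /edge_cut cutset_sub /=.
apply/existsP; exists x; apply/existsP; exists y; apply/negP => /(cut_closed (subxx _)).
by rewrite xZ (negbTE yZ).
Qed.

Lemma xcut_ge (Z : {set T}) x y : x \in Z -> y \notin Z -> 2 * edge_conn e <= xcut Z.
Proof. by move=> xZ yZ; rewrite xcut_cutset leq_mul2l (edge_conn_le xZ yZ). Qed.

End Cut.

Section Restr.
Variable T : finType.
Variable e : rel T.
Hypothesis esym : symmetric e.

Lemma remove_sym (S : {set {set T}}) : symmetric (remove_edges e S).
Proof. by move=> x y; rewrite /remove_edges esym setUC. Qed.

Lemma first_step (r : rel T) x y : connect r x y -> x != y -> exists z, r x z.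
Proof.
move=> /connectP [[|z p] /= pth ->]; first by rewrite eqxx.
by case/andP: pth => rz _ _; exists z.
Qed.

Lemma two_elems (A : {set T}) x : 2 <= #|A| -> exists2 y, y \in A & y != x.
Proof.
move=> cA; have : 0 < #|A :\ x|.
  rewrite (cardsD1 x A) in cA; case: (x \in A) cA => /= cA; last by apply: leq_trans cA.
  by rewrite -ltnS.
rewrite card_gt0 => /set0Pn [y]; rewrite !inE => /andP[yx yA]; by exists y.
Qed.

Lemma restr_lower (k : nat) :
  (forall (Z : {set T}) x0 y0, x0 \in Z -> y0 \notin Z ->
     (forall p, p \in Z -> exists2 q, e p q & q \in Z) ->
     (forall p, p \notin Z -> exists2 q, e p q & q \notin Z) ->
     2 * k <= xcut e Z) ->
  forall S, restricted_edge_cut e S -> k <= #|S|.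
Proof.
move=> Hk S /andP[/andP[Ssub /existsP[x /existsP[y nxy]]] /forallP comp].
set R := remove_edges e S.
have Rsym : symmetric R by apply: remove_sym.
set X := [set z | connect R x z].
have sub : cutset e X \subset S.
  apply/subsetP => s /imsetP [[p q]]; rewrite !inE /= => /andP[/andP[epq pX] qX] ->.
  apply/negPn/negP => nS; move/negP: qX; apply; apply: connect_trans pX _.
  by apply: connect1; rewrite /R /remove_edges epq.
have: 2 * k <= xcut e X.
  apply: (Hk X x y); first by rewrite inE connect0.
  - by rewrite inE.
  - move=> p; rewrite inE => xp.
    have [q qc qp] := two_elems p (comp p); rewrite inE in qc.
    have pq : p != q by rewrite eq_sym.
    have [r Rpr] := first_step qc pq.
    exists r; first by case/andP: Rpr.
    by rewrite inE (connect_trans xp (connect1 Rpr)).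
  - move=> p; rewrite inE => xp.
    have [q qc qp] := two_elems p (comp p); rewrite inE in qc.
    have pq : p != q by rewrite eq_sym.
    have [r Rpr] := first_step qc pq.
    exists r; first by case/andP: Rpr.
    rewrite inE; apply/negP => xr; move/negP: xp; apply.
    by apply: connect_trans xr (connect1 _); rewrite Rsym.
rewrite xcut_cutset // leq_mul2l /= => h; apply: leq_trans h _.
exact: subset_leq_card.
Qed.

End Restr.

Lemma ar a b : 0 < a -> 0 < b -> a + b - 2 = (a-1)+(b-1).
Proof. move=> ? ?; lia. Qed.

Lemma sum_eq1 (I : finType) (i : I) (F : I -> nat) :
  \sum_a (a == i) * F a = F i.
Proof. by rewrite (bigD1 i) //= eqxx mul1n big1 ?addn0 // => a /negbTE->. Qed.

Lemma ar3 m : 1 < m -> m + m.-1 + m.-1 = 3 * m - 2.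
Proof. move=> ?; lia. Qed.

Lemma arP x y m : x < m -> y < m -> (x.+1 == y) || (y.+1 == x) ->
  4 + (2 < m) <= (1 + (0 < x) + (x.+1 < m)) + (1 + (0 < y) + (y.+1 < m)).
Proof. move=> ? ? ?; lia. Qed.
Lemma ar5 x y : 0 < x -> 0 < y ->
  2 * ((x.+1 * 2 - 1) + (y.+1 * 2 - 1) - 2) <= 2 + 2 * x + (2 + 2 * y) + 2 * (x - 1) + 2 * (y - 1).
Proof. move=> ? ?; lia. Qed.
Lemma ar6 d (t : bool) : 2 * ((d.+1 * 2 - 1) + (d.+1 * (2 + t) - 1) - 2) <= 2 + d * (4 + t) + d * (4 + t).
Proof. case: t; lia. Qed.
Lemma ar7 x y : 0 < x -> 0 < y -> (x.+1 * 2 - 1) + (y.+1 * 2 - 1) - 2 <= 2 * (x + y - 2) + 4.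
Proof. move=> ? ?; lia. Qed.
Lemma ar8 d (t : bool) : (d.+1 * 2 - 1) + (d.+1 * (2 + t) - 1) - 2 <= 5 * d + 1.
Proof. case: t; lia. Qed.

Section Upper.
Variable T : finType.
Variable e : rel T.
Hypothesis esym : symmetric e.
Hypothesis eirr : irreflexive e.

Lemma sum_nbr_minus p q : e p q -> \sum_b (e p b && (b != q)) = deg e p - 1.
Proof.
move=> epq; rewrite -[LHS]big_mkcond /= sum1_card.
have -> : #|[pred b | e p b && (b != q)]| = #|[set b | e p b] :\ q|.
  by apply: eq_card => b; rewrite !inE andbC.
by rewrite /deg (cardsD1 q [set b | e p b]) inE epq add1n subn1.
Qed.

Lemma cutset_pair_card p q : e p q ->
  #|cutset e [set p; q]| <= deg e p + deg e q - 2.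
Proof.
move=> epq; have pq : p != q by apply/eqP => E; move: epq; rewrite E eirr.
rewrite card_cutset card_cutpairs.
have -> : deg e p + deg e q - 2 = (deg e p - 1) + (deg e q - 1).
  have : 0 < deg e p by rewrite /deg card_gt0; apply/set0Pn; exists q; rewrite inE.
  have : 0 < deg e q by rewrite /deg card_gt0; apply/set0Pn; exists p; rewrite inE esym.
  by move=> a b; apply: ar.
have eqp : e q p by rewrite esym.
rewrite -(sum_nbr_minus epq) -(sum_nbr_minus eqp).
rewrite -(sum_eq1 p (fun a => \sum_b (e a b && (b != q)))).
rewrite -(sum_eq1 q (fun a => \sum_b (e a b && (b != p)))).
rewrite -big_split /=; apply: leq_sum => a _.
rewrite !inE; case: (eqVneq a p) => [->|ap].
  rewrite ?eqxx ?(negbTE pq) ?mul1n ?mul0n ?addn0 /=; apply: leq_sum => b _.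
  by rewrite !inE; case: (e p b); case: (b == p); case: (b == q).
case: (eqVneq a q) => [->|aq] /=.
  rewrite ?eqxx ?(negbTE pq) ?mul1n ?mul0n ?addn0 ?add0n /=; apply: leq_sum => b _.
  by rewrite !inE; case: (e q b); case: (b == p); case: (b == q).
by rewrite big1 // => b _; rewrite andbF.
Qed.

Lemma cutset_pair_restr p q r : e p q -> r \notin [set p; q] ->
  (forall x, x \notin [set p; q] -> exists2 y, e x y & y \notin [set p; q]) ->
  restricted_edge_cut e (cutset e [set p; q]).
Proof.
move=> epq rW nbr; have pq : p != q by apply/eqP => E; move: epq; rewrite E eirr.
set W := [set p; q]; set S := cutset e W.
have notS : forall a b, a \in W -> b \in W -> [set a; b] \notin S.
  move=> a b aW bW; apply/imsetP => [[[x y]]]; rewrite /cutpairs in_set /=.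
  move=> /andP[/andP[_ xW] yW] E.
  have : y \in [set a; b] by rewrite E !inE eqxx orbT.
  rewrite !inE => /orP[/eqP ya|/eqP yb]; [by rewrite ya aW in yW | by rewrite yb bW in yW].
have notS' : forall a b, a \notin W -> b \notin W -> [set a; b] \notin S.
  move=> a b aW bW; apply/imsetP => [[[x y]]]; rewrite /cutpairs in_set /=.
  move=> /andP[/andP[_ xW] yW] E.
  have : x \in [set a; b] by rewrite E !inE eqxx.
  rewrite !inE => /orP[/eqP xa|/eqP xb]; [by rewrite xa (negbTE aW) in xW | by rewrite xb (negbTE bW) in xW].
rewrite /restricted_edge_cut /edge_cut cutset_sub /=.
apply/andP; split.
  apply/existsP; exists p; apply/existsP; exists r; apply/negP => /(cut_closed esym (subxx _)).
  by rewrite (negbTE rW) !inE eqxx.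
apply/forallP => x.
have Rpq : remove_edges e S p q by rewrite /remove_edges epq notS // !inE eqxx ?orbT.
case xW: (x \in W).
  apply: (@leq_trans #|W|); first by rewrite cards2 pq.
  apply: subset_leq_card; apply/subsetP => y; rewrite !inE.
  move: xW; rewrite !inE => /orP[/eqP->|/eqP->] /orP[/eqP->|/eqP->];
    rewrite ?connect0 ?connect1 //.
  by rewrite remove_sym.
have [y exy yW] := nbr x (negbT xW).
have xy : x != y by apply/eqP => E; move: exy; rewrite E eirr.
apply: (@leq_trans #|[set x; y]|); first by rewrite cards2 xy.
apply: subset_leq_card; apply/subsetP => z; rewrite !inE => /orP[/eqP->|/eqP->].
  exact: connect0.
by apply: connect1; rewrite /remove_edges exy notS' ?xW.
Qed.

End Upper.

Section Argmin.
Variable T : finType.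
Variable e : rel T.

Lemma deg_le v : deg e v <= #|T|.
Proof. exact: max_card. Qed.

Lemma med_le p : e p.1 p.2 -> min_edge_deg e <= deg e p.1 + deg e p.2 - 2.
Proof. move=> ep; exact: (bigmin_le (P := fun p : T * T => e p.1 p.2)). Qed.

Lemma med_attained x y : e x y ->
  exists2 p : T * T, e p.1 p.2 & min_edge_deg e = deg e p.1 + deg e p.2 - 2.
Proof.
move=> exy.
case: (@arg_minnP _ (x, y) (fun p : T * T => e p.1 p.2)
         (fun p => deg e p.1 + deg e p.2 - 2) exy) => p ep pmin.
exists p => //; apply/eqP; rewrite eqn_leq med_le //=.
apply: bigmin_ge => //.
by rewrite mul2n -addnn (leq_trans (leq_subr _ _)) // leq_add ?deg_le.
Qed.

Lemma mindeg_attained (x : T) : exists u, min_deg e = deg e u.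
Proof.
case: (@arg_minnP _ x predT (deg e) isT) => u _ umin.
exists u; apply/eqP; rewrite eqn_leq (bigmin_le (P := predT)) //=.
by apply: bigmin_ge => //; rewrite deg_le.
Qed.

End Argmin.

Lemma sum_ord_eq n m : \sum_(j < n) (j == m :> nat) = (m < n).
Proof.
elim: n => [|n IH]; first by rewrite big_ord0.
rewrite big_ord_recr /= IH ltnS (leq_eqVlt m n) (eq_sym n m).
by case: (ltngtP m n).
Qed.

Lemma deg_sum (T : finType) (e : rel T) v : deg e v = \sum_w e v w.
Proof. by rewrite /deg -sum1_card big_mkcond /=; apply: eq_bigr => w _; rewrite inE; case: (e v w). Qed.

Lemma adj_nat x y : ((y == x) || (y.+1 == x) || (x.+1 == y) : nat) =
  (x == y) + (x == y.-1) * (0 < y) + (x == y.+1).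
Proof. lia. Qed.

Section Prod.
Variable V : finType.
Variable g : rel V.
Hypothesis gsym : symmetric g.
Hypothesis girr : irreflexive g.
Variable n : nat.
Hypothesis n2 : 1 < n.

Definition P := (V * 'I_n)%type.
Definition H : rel P := strong_prod g (path_graph n).
Definition adj (i j : 'I_n) := (i == j) || path_graph n i j.
Definition alpha (i : 'I_n) := #|[set j | adj i j]|.

Lemma pg_sym : symmetric (path_graph n).
Proof. by move=> i j; rewrite /path_graph orbC. Qed.

Lemma pg_irr : irreflexive (path_graph n).
Proof. by move=> i; rewrite /path_graph orbb; apply/negbTE; rewrite neq_ltn ltnSn orbT. Qed.

Lemma pg_neq i j : path_graph n i j -> i != j.
Proof. by apply: contraTneq => ->; rewrite pg_irr. Qed.

Lemma H_eq v i w j : H (v, i) (w, j) =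
  if v == w then path_graph n i j else g v w && adj i j.
Proof.
rewrite /H /strong_prod /adj /=; case: (eqVneq v w) => [->|vw] /=.
  by rewrite girr andbF andFb !orbF.
by rewrite andbC andb_orr.
Qed.

Lemma H_sym : symmetric H.
Proof.
move=> [v i] [w j]; rewrite !H_eq eq_sym; case: (w == v); first exact: pg_sym.
by rewrite gsym /adj pg_sym eq_sym.
Qed.

Lemma H_irr : irreflexive H.
Proof. by move=> [v i]; rewrite H_eq eqxx pg_irr. Qed.

Lemma alpha_val (i : 'I_n) : alpha i = 1 + (0 < i) + (i.+1 < n).
Proof.
rewrite /alpha -sum1_card big_mkcond /=.
have -> : \sum_j (if j \in [set j | adj i j] then 1 else 0) =
   \sum_(j < n) ((j == i :> nat) + (j == i.-1 :> nat) * (0 < i) + (j == i.+1 :> nat)).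
  apply: eq_bigr => j _; rewrite inE -adj_nat /adj /path_graph orbA.
  by case: (_ || _).
rewrite !big_split /= sum_ord_eq ltn_ord -big_distrl /= sum_ord_eq.
by rewrite sum_ord_eq (leq_ltn_trans (leq_pred i) (ltn_ord i)) mul1n.
Qed.

Lemma degH v i : deg H (v, i) = (deg g v).+1 * alpha i - 1.
Proof.
rewrite /deg; have -> : [set y | H (v, i) y] =
   (setX (v |: [set w | g v w]) [set j | adj i j]) :\ (v, i).
  apply/setP => [[w j]]; rewrite !inE H_eq /= xpair_eqE.
  case: (eqVneq v w) => [<-|vw] /=.
    rewrite /adj; case: (eqVneq j i) => [->|ji] /=; first by rewrite pg_irr.
    by [].
  by [].
set A := setX _ _.
have vA : (v, i) \in A by rewrite !inE eqxx /adj eqxx.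
have E := cardsD1 (v, i) A; rewrite vA add1n in E.
have cA : #|A| = (#|[set y | g v y]|).+1 * alpha i by rewrite cardsX cardsU1 inE girr add1n.
by rewrite -cA E subSS subn0.
Qed.

Definition i0 : 'I_n := Ordinal (ltnW n2).
Definition i1 : 'I_n := Ordinal n2.

Lemma alpha_i0 : alpha i0 = 2.
Proof. by rewrite alpha_val /= n2. Qed.

Lemma alpha_i1 : alpha i1 = 2 + (2 < n).
Proof. by rewrite alpha_val. Qed.

Lemma pg01 : path_graph n i0 i1.
Proof. by []. Qed.


Definition f (Z : {set P}) (x y : P) : nat := H x y && ((x \in Z) != (y \in Z)).
Definition K Z v w := \sum_i \sum_j f Z (v, i) (w, j).
Definition L Z i j := \sum_v \sum_w f Z (v, i) (w, j).

Lemma sumP (F : P -> nat) : \sum_x F x = \sum_v \sum_i F (v, i).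
Proof. by rewrite pair_bigA; apply: eq_bigr => [[]]. Qed.

Lemma xcut_K Z : xcut H Z = \sum_v \sum_w K Z v w.
Proof.
rewrite /xcut sumP; apply: eq_bigr => v _; rewrite /K.
rewrite (eq_bigr (fun i => \sum_w \sum_j f Z (v, i) (w, j))); last first.
  by move=> i _; rewrite sumP.
by rewrite exchange_big.
Qed.

Lemma xcut_L Z : xcut H Z = \sum_i \sum_j L Z i j.
Proof.
rewrite xcut_K /K /L.
rewrite (eq_bigr (fun v => \sum_i \sum_w \sum_j f Z (v, i) (w, j))); last first.
  by move=> v _; rewrite exchange_big.
rewrite exchange_big; apply: eq_bigr => i _.
rewrite (eq_bigr (fun v => \sum_j \sum_w f Z (v, i) (w, j))); last first.
  by move=> v _; rewrite exchange_big.
by rewrite exchange_big.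
Qed.

Lemma f_sym Z x y : f Z x y = f Z y x.
Proof. by rewrite /f H_sym eq_sym. Qed.

Lemma K_sym Z v w : K Z v w = K Z w v.
Proof.
rewrite /K exchange_big; apply: eq_bigr => i _; apply: eq_bigr => j _.
exact: f_sym.
Qed.

Lemma bool_submod (gg a1 b1 a2 b2 : bool) :
  (gg && ((a1 && b1) != (a2 && b2))) + (gg && ((a1 || b1) != (a2 || b2))) <=
  (gg && (a1 != b2)) + (gg && (a2 != b1)).
Proof. by case: gg; case: a1; case: b1; case: a2; case: b2. Qed.

Lemma submod (A B : {set V}) u w0 : u \in A -> u \in B -> w0 \notin A -> w0 \notin B ->
  2 * edge_conn g <= \sum_v \sum_w (g v w && ((v \in A) != (w \in B))).
Proof.
move=> uA uB wA wB.
rewrite -(leq_pmul2l (_ : 0 < 2)) //.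
set S := \sum_v \sum_w _.
have E2 : \sum_v \sum_w (g v w && ((w \in A) != (v \in B))) = S.
  rewrite exchange_big /=; apply: eq_bigr => v _; apply: eq_bigr => w _.
  by rewrite gsym.
have -> : 2 * S = \sum_v \sum_w ((g v w && ((v \in A) != (w \in B))) +
                                 (g v w && ((w \in A) != (v \in B)))).
  have -> : \sum_v \sum_w ((g v w && ((v \in A) != (w \in B))) +
                                 (g v w && ((w \in A) != (v \in B)))) =
            S + \sum_v \sum_w (g v w && ((w \in A) != (v \in B))).
    by rewrite -big_split; apply: eq_bigr => v _; rewrite big_split.
  by rewrite E2 mul2n addnn.
apply: (@leq_trans (xcut g (A :&: B) + xcut g (A :|: B))).
  rewrite (mul2n (2 * edge_conn g)) -addnn.
  rewrite leq_add //.
    by apply: (xcut_ge gsym (x := u) (y := w0)); rewrite !inE ?uA ?uB // negb_and wA.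
  by apply: (xcut_ge gsym (x := u) (y := w0)); rewrite !inE ?uA ?uB // negb_or wA wB.
rewrite /xcut -big_split; apply: leq_sum => v _; rewrite -big_split; apply: leq_sum => w _.
by rewrite !inE bool_submod.
Qed.

Lemma sum_pos m : \sum_(i < m) (0 < i) = m.-1.
Proof.
elim: m => [|m IH]; first by rewrite big_ord0.
rewrite big_ord_recr /= IH; clear IH; case: m => [|m] //=; by rewrite addn1.
Qed.

Lemma sum_succ m : \sum_(i < m) (i.+1 < m) = m.-1.
Proof.
case: m => [|m]; first by rewrite big_ord0.
rewrite big_ord_recr /= ltnn addn0 (eq_bigr (fun _ => 1)); last by move=> i _; rewrite ltnS ltn_ord.
by rewrite sum_nat_const card_ord muln1.
Qed.

Lemma sum_alpha : \sum_i alpha i = 3 * n - 2.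
Proof.
rewrite (eq_bigr (fun i : 'I_n => 1 + (0 < i) + (i.+1 < n))); last by move=> i _; rewrite alpha_val.
rewrite !big_split /= sum_pos sum_succ sum_nat_const card_ord muln1.
exact: ar3.
Qed.

Lemma sum_adj i : \sum_j adj i j = alpha i.
Proof. by rewrite /alpha -sum1_card [RHS]big_mkcond /=; apply: eq_bigr => j _; rewrite inE; case: adj. Qed.

Lemma L_ge (Z : {set P}) (u w0 : V) i j : (forall k, (u, k) \in Z) -> (forall k, (w0, k) \notin Z) ->
  adj i j -> 2 * edge_conn g <= L Z i j.
Proof.
move=> uZ wZ; rewrite /adj => /orP[/eqP <-|pij].
  apply: (@leq_trans (xcut g [set v | (v, i) \in Z])).
    by apply: (xcut_ge gsym (x := u) (y := w0)); rewrite !inE ?uZ ?wZ.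
  rewrite /xcut /L /f; apply: leq_sum => v _; apply: leq_sum => w _.
  rewrite H_eq !inE /adj eqxx pg_irr orbF andbT; case: (eqVneq v w) => [->|//].
  by rewrite girr.
apply: (@leq_trans (\sum_v \sum_w (g v w && ((v \in [set v | (v, i) \in Z]) !=
                                               (w \in [set v | (v, j) \in Z]))))).
  by apply: (submod (u := u) (w0 := w0)); rewrite !inE ?uZ ?wZ.
rewrite /L /f; apply: leq_sum => v _; apply: leq_sum => w _.
rewrite H_eq !inE /adj pij orbT andbT; case: (eqVneq v w) => [->|//].
by rewrite girr.
Qed.

Lemma caseA (Z : {set P}) (u w0 : V) : (forall k, (u, k) \in Z) -> (forall k, (w0, k) \notin Z) ->
  2 * ((3 * n - 2) * edge_conn g) <= xcut H Z.
Proof.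
move=> uZ wZ; rewrite xcut_L -sum_alpha.
have -> : 2 * ((\sum_i alpha i) * edge_conn g) =
          \sum_i \sum_j adj i j * (2 * edge_conn g).
  rewrite [RHS](eq_bigr (fun i => alpha i * (2 * edge_conn g))); last first.
    by move=> i _; rewrite -sum_adj big_distrl.
  by rewrite -big_distrl /= mulnCA.
apply: leq_sum => i _; apply: leq_sum => j _.
case aij: (adj i j); last by rewrite mul0n.
by rewrite mul1n (L_ge uZ wZ aij).
Qed.


Lemma pg_nbr (k : 'I_n) : exists k', path_graph n k k'.
Proof.
case: (ltnP k.+1 n) => h.
  by exists (Ordinal h); rewrite /path_graph /= eqxx.
have k0 : 0 < k by move: (ltn_ord k) h n2 => a b c; lia.
have kn : k.-1 < n by rewrite (leq_ltn_trans (leq_pred _) (ltn_ord k)).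
by exists (Ordinal kn); rewrite /path_graph /= prednK // eqxx orbT.
Qed.

Lemma boundary (b : 'I_n -> bool) i i' : b i != b i' ->
  exists k k' : 'I_n, path_graph n k k' && (b k != b k').
Proof.
set c := fun m => [exists k : 'I_n, (k == m :> nat) && b k].
have cE : forall k : 'I_n, c k = b k.
  move=> k; apply/existsP/idP => [[k' /andP[/eqP E bk]]|bk]; last by exists k; rewrite eqxx.
  by move: bk; rewrite (_ : k' = k) //; apply: val_inj.
have natb : forall d m, c m != c (m + d) -> exists2 k, m <= k < m + d & c k != c k.+1.
  elim=> [|d IH] m; first by rewrite addn0 eqxx.
  case: (eqVneq (c (m + d)) (c (m + d).+1)) => [E|ne] h.
    have h' : c m != c (m + d) by rewrite E -addnS.
    have [k /andP[k1 k2] ck] := IH m h'.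
    by exists k => //; rewrite k1 /= (leq_trans k2) // leq_add2l.
  by exists (m + d); rewrite ?leq_addr ?addnS ?ltnSn.
wlog lt : i i' / i < i'.
  move=> W bi; case: (ltngtP i i') => h; first exact: W h bi.
    have bi' : b i' != b i by rewrite eq_sym.
    have [k [k' /andP[p ne]]] := W i' i h bi'.
    by exists k, k'; rewrite p ne.
  by move: bi; rewrite (_ : i = i') ?eqxx //; apply: val_inj.
move=> bi; have := natb (i' - i) i; rewrite subnKC ?(ltnW lt) // !cE => /(_ bi).
case=> k /andP[ik ki'] ck.
have kn : k < n by apply: ltn_trans ki' (ltn_ord i').
have k1n : k.+1 < n by apply: leq_ltn_trans ki' (ltn_ord i').
exists (Ordinal kn), (Ordinal k1n); rewrite /path_graph /= eqxx /=.
by rewrite -!cE.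
Qed.

Lemma pair_neq1 (A B : eqType) (a c : A) (b d : B) : a != c -> (a, b) != (c, d).
Proof. by apply: contra => /eqP [->]. Qed.
Lemma pair_neq2 (A B : eqType) (a c : A) (b d : B) : b != d -> (a, b) != (c, d).
Proof. by apply: contra => /eqP [_ ->]. Qed.

Lemma sum_ge1 (I : finType) (G : I -> nat) x : G x <= \sum_i G i.
Proof. by rewrite (bigD1 x) //= leq_addr. Qed.

Lemma sum_ge2 (I : finType) (G : I -> nat) x y : x != y -> G x + G y <= \sum_i G i.
Proof.
move=> xy; rewrite (bigD1 x) //= leq_add2l (bigD1 y) /=; first exact: leq_addr.
by rewrite eq_sym.
Qed.

Lemma dsum_ge2 (I J : finType) (F : I -> J -> nat) a b c d : (a, b) != (c, d) ->
  F a b + F c d <= \sum_i \sum_j F i j.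
Proof. by move=> ne; rewrite pair_bigA; exact: (sum_ge2 (fun p => F p.1 p.2) ne). Qed.

Lemma K_col (Z : {set P}) v i i' : (v, i) \in Z -> (v, i') \notin Z -> 2 <= K Z v v.
Proof.
move=> vi vi'.
have bb : ((v, i) \in Z) != ((v, i') \in Z) by rewrite vi (negbTE vi').
have [k [k' /andP[p ne]]] := boundary (b := fun k => (v, k) \in Z) bb.
have kk : (k, k') != (k', k) by exact: pair_neq1 (pg_neq p).
apply: leq_trans (dsum_ge2 (fun k l => f Z (v, k) (v, l)) kk).
by rewrite /f !H_eq eqxx p pg_sym p /= ne eq_sym ne.
Qed.

Lemma K_pair (Z : {set P}) v w i i' j : g v w -> (v, i) \in Z -> (v, i') \notin Z ->
  (w, j) \notin Z -> 2 <= K Z v w.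
Proof.
move=> gvw vi vi' wj.
have vw : v != w by apply/eqP => E; move: gvw; rewrite E girr.
have fE : forall k l, f Z (v, k) (w, l) = adj k l && (((v, k) \in Z) != ((w, l) \in Z)).
  by move=> k l; rewrite /f H_eq (negbTE vw) gvw.
case: (boolP [forall k, ((v, k) \in Z) == ((w, k) \in Z)]) => [/forallP same|].
  have bb : ((v, i) \in Z) != ((v, i') \in Z) by rewrite vi (negbTE vi').
  have [k [k' /andP[p ne]]] := boundary (b := fun k => (v, k) \in Z) bb.
  have kk : (k, k') != (k', k) by exact: pair_neq1 (pg_neq p).
  apply: leq_trans (dsum_ge2 (fun k l => f Z (v, k) (w, l)) kk).
  by rewrite /= !fE /adj p pg_sym p !orbT /= -!(eqP (same _)) ne eq_sym ne.
rewrite negb_forall => /existsP [k ne].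
have [k' p] := pg_nbr k.
have kk : (k, k) != (k, k') by apply: pair_neq2; exact: pg_neq p.
have kk2 : (k, k) != (k', k) by apply: pair_neq1; exact: pg_neq p.
have kk3 : (k, k) != (k', k') by apply: pair_neq1; exact: pg_neq p.
have f1 : f Z (v, k) (w, k) = 1 by rewrite fE /adj eqxx /= ne.
case e1: (((v, k) \in Z) != ((w, k') \in Z)).
  by apply: leq_trans (dsum_ge2 (fun k l => f Z (v, k) (w, l)) kk); rewrite /= f1 fE /adj p orbT e1.
case e2: (((v, k') \in Z) != ((w, k) \in Z)).
  apply: leq_trans (dsum_ge2 (fun k l => f Z (v, k) (w, l)) kk2).
  by rewrite /= f1 fE /adj pg_sym p orbT e2.
apply: leq_trans (dsum_ge2 (fun k l => f Z (v, k) (w, l)) kk3).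
rewrite /= f1 fE /adj eqxx /=.
move: ne e1 e2; case: ((v, k) \in Z); case: ((w, k) \in Z); case: ((v, k') \in Z);
  by case: ((w, k') \in Z).
Qed.

Lemma K_out (Z : {set P}) v w i j : g v w -> (forall k, (w, k) \notin Z) ->
  (v, i) \in Z -> (v, j) \in Z -> i != j -> alpha i + alpha j <= K Z v w.
Proof.
move=> gvw wZ vi vj ij.
have vw : v != w by apply/eqP => E; move: gvw; rewrite E girr.
have fE : forall k l, (v, k) \in Z -> f Z (v, k) (w, l) = adj k l.
  by move=> k l vk; rewrite /f H_eq (negbTE vw) gvw vk (negbTE (wZ l)) andbT.
apply: leq_trans (sum_ge2 (fun k => \sum_l f Z (v, k) (w, l)) ij).
rewrite /= -!sum_adj leq_add //; apply: leq_sum => l _; by rewrite fE.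
Qed.


Definition R Z v := \sum_w K Z v w.

Lemma xcut_R Z : xcut H Z = \sum_v R Z v.
Proof. exact: xcut_K. Qed.

Lemma R_ge (Z : {set P}) v i : (v, i) \in Z -> (forall w, exists j, (w, j) \notin Z) ->
  2 + 2 * deg g v <= R Z v.
Proof.
move=> vi nz; have [i' vi'] := nz v.
apply: (@leq_trans (\sum_w ((w == v) * 2 + g v w * 2))).
  rewrite big_split /= (sum_eq1 v (fun _ => 2)) -big_distrl /= -deg_sum mulnC.
  by [].
apply: leq_sum => w _; case: (eqVneq w v) => [->|wv] /=.
  by rewrite girr /= addn0 (K_col vi vi').
case gvw: (g v w); last by [].
have [j wj] := nz w.
by rewrite /= (K_pair gvw vi vi' wj).
Qed.

Lemma caseB1 (Z : {set P}) a b ia ib : g a b -> (a, ia) \in Z -> (b, ib) \in Z ->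
  (forall w, exists j, (w, j) \notin Z) ->
  2 + 2 * deg g a + (2 + 2 * deg g b) + 2 * (deg g a - 1) + 2 * (deg g b - 1)
     <= xcut H Z.
Proof.
move=> gab aZ bZ nz.
have ab : a != b by apply/eqP => E; move: gab; rewrite E girr.
rewrite xcut_R.
apply: (@leq_trans (\sum_v ((v == a) * R Z a + (v == b) * R Z b +
          ((v != a) && (v != b)) * (K Z v a + K Z v b)))); last first.
  apply: leq_sum => v _; case: (eqVneq v a) => [->|va].
    by rewrite (negbTE ab) /= mul1n !mul0n !addn0.
  case: (eqVneq v b) => [->|vb] /=; first by rewrite mul1n mul0n add0n addn0.
  by rewrite mul1n (sum_ge2 (fun w => K Z v w) ab).
rewrite !big_split /= (sum_eq1 a (fun _ => R Z a)) (sum_eq1 b (fun _ => R Z b)).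
rewrite -[X in X <= _]addnA.
apply: leq_add; first exact: leq_add (R_ge aZ nz) (R_ge bZ nz).
have [ia' aZ'] := nz a; have [ib' bZ'] := nz b.
have -> : \sum_v ((v != a) && (v != b)) * (K Z v a + K Z v b) =
  \sum_v ((v != a) && (v != b)) * K Z v a + \sum_v ((v != a) && (v != b)) * K Z v b.
  by rewrite -big_split; apply: eq_bigr => v _; rewrite mulnDr.
apply: leq_add.
  rewrite -(sum_nbr_minus gab) big_distrr /=; apply: leq_sum => v _.
  case gav: (g a v); case: (eqVneq v b) => [->|vb] //=; rewrite ?andbF ?muln0 //.
  have va : v != a by apply/eqP => E; move: gav; rewrite E girr.
  have [j vj] := nz v.
  by rewrite va mul1n muln1 K_sym (K_pair gav aZ aZ' vj).
have gba : g b a by rewrite gsym.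
rewrite -(sum_nbr_minus gba) big_distrr /=; apply: leq_sum => v _.
case gbv: (g b v); case: (eqVneq v a) => [->|va] //=; rewrite ?muln0 //.
have vb : v != b by apply/eqP => E; move: gbv; rewrite E girr.
have [j vj] := nz v.
by rewrite vb mul1n muln1 K_sym (K_pair gbv bZ bZ' vj).
Qed.

Lemma caseB2 (Z : {set P}) a i j : path_graph n i j -> (a, i) \in Z -> (a, j) \in Z ->
  (forall c, g a c -> forall k, (c, k) \notin Z) ->
  (forall w, exists j, (w, j) \notin Z) ->
  2 + deg g a * (alpha i + alpha j) + deg g a * (alpha i + alpha j) <= xcut H Z.
Proof.
move=> pij ai aj out nz.
have [ia' aZ'] := nz a.
have ij := pg_neq pij.
rewrite xcut_R.
apply: (@leq_trans (\sum_v ((v == a) * R Z a + (v != a) * K Z v a))); last first.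
  apply: leq_sum => v _; case: (eqVneq v a) => [->|va] /=.
    by rewrite mul1n mul0n addn0.
  by rewrite mul0n mul1n add0n (sum_ge1 (fun w => K Z v w)).
rewrite big_split /= (sum_eq1 a (fun _ => R Z a)); apply: leq_add.
  apply: (@leq_trans (\sum_w ((w == a) * 2 + g a w * (alpha i + alpha j)))).
    by rewrite big_split /= (sum_eq1 a (fun _ => 2)) -big_distrl /= -deg_sum.
  apply: leq_sum => w _; case: (eqVneq w a) => [->|wa] /=.
    by rewrite girr /= addn0 (K_col ai aZ').
  case gaw: (g a w); last by [].
  by rewrite /= mul1n (K_out gaw (out w gaw) ai aj ij).
rewrite deg_sum big_distrl /=; apply: leq_sum => v _.
case gav: (g a v); last by [].
have va : v != a by apply/eqP => E; move: gav; rewrite E girr.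
by rewrite va !mul1n K_sym (K_out gav (out v gav) ai aj ij).
Qed.


Lemma deg_pos (a c : V) : g a c -> 0 < deg g a.
Proof. by move=> gac; rewrite /deg card_gt0; apply/set0Pn; exists c; rewrite inE. Qed.

Lemma alpha_path i j : path_graph n i j -> 4 + (2 < n) <= alpha i + alpha j.
Proof. by move=> pij; rewrite !alpha_val; apply: arP; rewrite ?ltn_ord. Qed.

Lemma core (Z : {set P}) z0 : z0 \in Z ->
  (forall p, p \in Z -> exists2 q, H p q & q \in Z) ->
  (forall v, exists j, (v, j) \notin Z) ->
  2 * min_edge_deg H <= xcut H Z.
Proof.
case: z0 => a i ai nbr nz.
case: (boolP [exists c, g a c && [exists k, (c, k) \in Z]]).
  move=> /existsP [c /andP [gac /existsP [k ck]]].
  apply: leq_trans (caseB1 gac ai ck nz).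
  have hH : H (a, i0) (c, i0).
    by rewrite H_eq; case: (eqVneq a c) => [E|_]; [move: gac; rewrite E girr | rewrite gac /adj eqxx].
  apply: leq_trans (ar5 (deg_pos gac) (deg_pos (_ : g c a))); last by rewrite gsym.
  rewrite leq_mul2l /=.
  by apply: leq_trans (med_le (p := ((a, i0), (c, i0))) hH) _; rewrite /= !degH alpha_i0.
move=> none.
have [[b j] hij bj] := nbr _ ai.
have out : forall c, g a c -> forall k, (c, k) \notin Z.
  move=> c gac k; apply/negP => ck; move/negP: none; apply.
  by apply/existsP; exists c; rewrite gac; apply/existsP; exists k.
move: hij; rewrite H_eq; case: (eqVneq a b) => [E|ab] hij; last first.
  case/andP: hij => gab _; by move: (out b gab j); rewrite bj.
rewrite -E in bj.
have B2 := caseB2 hij ai bj out nz.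
have hH : H (a, i0) (a, i1) by rewrite H_eq eqxx pg01.
apply: (@leq_trans (2 + deg g a * (4 + (2 < n)) + deg g a * (4 + (2 < n)))); last first.
  apply: leq_trans B2; rewrite leq_add ?leq_add2l ?leq_mul2l ?alpha_path ?orbT //.
apply: leq_trans (ar6 _ _); rewrite leq_mul2l /=.
by apply: leq_trans (med_le (p := ((a, i0), (a, i1))) hH) _; rewrite /= !degH alpha_i0 alpha_i1.
Qed.


Lemma lower (Z : {set P}) x0 y0 : min_edge_deg H <= (3 * n - 2) * edge_conn g ->
  x0 \in Z -> y0 \notin Z ->
  (forall p, p \in Z -> exists2 q, H p q & q \in Z) ->
  (forall p, p \notin Z -> exists2 q, H p q & q \notin Z) ->
  2 * min_edge_deg H <= xcut H Z.
Proof.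
move=> hA xZ yZ nZ nC.
case: (boolP [forall v, [exists j, (v, j) \notin Z]]) => [/forallP all1|].
  by apply: (core xZ nZ) => v; have /existsP := all1 v.
rewrite negb_forall => /existsP [u]; rewrite negb_exists => /forallP uZ.
case: (boolP [forall v, [exists j, (v, j) \in Z]]) => [/forallP all2|].
  rewrite -xcutC; apply: (core (z0 := y0)); first by rewrite inE.
    move=> p; rewrite inE => pZ; have [q pq qZ] := nC p pZ.
    by exists q; rewrite ?inE.
  by move=> v; have /existsP [j vj] := all2 v; exists j; rewrite inE negbK.
rewrite negb_forall => /existsP [w]; rewrite negb_exists => /forallP wZ.
apply: leq_trans (caseA (u := u) (w0 := w) _ _); first by rewrite leq_mul2l hA orbT.
  by move=> k; have := uZ k; rewrite negbK.
exact: wZ.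
Qed.

Lemma three_in_two (T : finType) (a b c p q : T) : a != b -> a != c -> b != c ->
  a \in [set p; q] -> b \in [set p; q] -> c \in [set p; q] -> False.
Proof.
move=> ab ac bc; rewrite !inE.
case/orP=> /eqP ea; case/orP=> /eqP eb; case/orP=> /eqP ec; subst;
  by rewrite ?eqxx in ab ac bc.
Qed.

Lemma nbrG : connected g -> nontrivial V -> forall v, exists w, g v w.
Proof.
move=> cg nt v.
have c2 : 2 <= #|[set: V]| by rewrite cardsT.
have [w _ wv] := two_elems v c2.
have vw : v != w by rewrite eq_sym.
have [z gz] := first_step (cg v w) vw.
by exists z.
Qed.

Lemma main_prod : connected g -> nontrivial V ->
  min_edge_deg H <= (3 * n - 2) * edge_conn g ->
  restr_edge_conn H = min_edge_deg H.
Proof.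
move=> cg nt hA.
have [v _] : exists v : V, v \in V by apply/card_gt0P; rewrite (ltnW nt).
have [w gvw] := nbrG cg nt v.
have hvw : H (v, i0) (w, i0).
  rewrite H_eq; case: (eqVneq v w) => [E|_]; first by move: gvw; rewrite E girr.
  by rewrite gvw /adj eqxx.
have [[p q] /= hpq med] := med_attained hvw.
set W := [set p; q].
have [r rW] : exists r, r \notin W.
  case: (boolP [exists r, r \notin W]) => [/existsP //|].
  rewrite negb_exists => /forallP allW; exfalso.
  have : #|[set: P]| <= #|W|.
    by apply: subset_leq_card; apply/subsetP => x _; have := allW x; rewrite negbK.
  rewrite cardsT /P card_prod card_ord cards2; apply/negP; rewrite -ltnNge.
  apply: (@leq_trans (2 * 2)); first by case: (p != q).
  by rewrite leq_mul // ltnW.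
have nbW : forall x, x \notin W -> exists2 y, H x y & y \notin W.
  move=> [x i] xW.
  have [y gxy] := nbrG cg nt x.
  have [k pik] := pg_nbr i.
  have xy : x != y by apply/eqP => E; move: gxy; rewrite E girr.
  have h1 : H (x, i) (x, k) by rewrite H_eq eqxx.
  have h2 : H (x, i) (y, i) by rewrite H_eq (negbTE xy) gxy /adj eqxx.
  have h3 : H (x, i) (y, k) by rewrite H_eq (negbTE xy) gxy /adj pik orbT.
  case c1: ((x, k) \in W); last by exists (x, k); rewrite ?c1.
  case c2: ((y, i) \in W); last by exists (y, i); rewrite ?c2.
  case c3: ((y, k) \in W); last by exists (y, k); rewrite ?c3.
  exfalso; apply: (three_in_two _ _ _ c1 c2 c3).
  - exact: pair_neq1.
  - exact: pair_neq1.
  - exact: pair_neq2 (pg_neq pik).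
have rc := cutset_pair_restr H_sym H_irr hpq rW nbW.
have low : forall S, restricted_edge_cut H S -> min_edge_deg H <= #|S|.
  apply: (restr_lower H_sym) => Z x0 y0 xZ yZ nZ nC.
  exact: (lower hA xZ yZ nZ nC).
apply/eqP; rewrite eqn_leq; apply/andP; split.
  apply: leq_trans (bigmin_le _ _ rc) _.
  by rewrite med; apply: cutset_pair_card => //; [exact: H_sym | exact: H_irr].
apply: bigmin_ge => //.
apply: leq_trans (low _ rc) _.
apply: subset_leq_card; exact: cutset_sub.
Qed.

Lemma medH_bound : connected g -> nontrivial V ->
  min_edge_deg H <= minn (2 * min_edge_deg g + 4) (5 * min_deg g + 1).
Proof.
move=> cg nt.
have [v _] : exists v : V, v \in V by apply/card_gt0P; rewrite (ltnW nt).
have [w gvw] := nbrG cg nt v.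
rewrite leq_min; apply/andP; split.
  have [[a b] /= gab ->] := med_attained gvw.
  have hH : H (a, i0) (b, i0).
    rewrite H_eq; case: (eqVneq a b) => [E|_]; first by move: gab; rewrite E girr.
    by rewrite gab /adj eqxx.
  apply: leq_trans (med_le (p := ((a, i0), (b, i0))) hH) _.
  rewrite /= !degH alpha_i0; apply: ar7; first exact: deg_pos gab.
  by apply: (@deg_pos b a); rewrite gsym.
have [u ->] := mindeg_attained g v.
have hH : H (u, i0) (u, i1) by rewrite H_eq eqxx pg01.
apply: leq_trans (med_le (p := ((u, i0), (u, i1))) hH) _.
by rewrite /= !degH alpha_i0 alpha_i1; apply: ar8.
Qed.

End Prod.

Theorem corollary3p2 (V : finType) (g : rel V) (n : nat) :
  simple_graph g -> connected g -> nontrivial V -> 2 <= n ->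
  minn ((3 * n - 2) * edge_conn g) (#|V| + 2 * num_edges g)
    >= minn (2 * min_edge_deg g + 4) (5 * min_deg g + 1) ->
  max_restr_edge_conn (strong_prod g (path_graph n)).
Proof.
move=> [gsym girr] cg nt n2 hyp.
rewrite /max_restr_edge_conn.
apply: (main_prod gsym girr n2 cg nt).
apply: leq_trans (medH_bound gsym girr n2 cg nt) _.
by apply: leq_trans hyp _; rewrite geq_minl.
Qed.
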